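(* Let $C(x)=\log_2(1+x)$. A device $U_i$ transmits to a machine-type device $M_i$ at fixed rate $R_M>0$ with power $P_{U_i}$, while a device $U_j$ simultaneously transmits to base station $B$ with power $P_{U_j}\in[0,P_U^{Max}]$ and rate $R_{U_j}$. The constraints are: (i) $M_i$ must decode $U_i$ treating $U_j$ as noise, i.e. $P_{U_j}\le P^\ast_{U_j}:=\left(\frac{P_{U_i}|h_{U_i,M_i}|^2}{2^{R_M}-1}-\sigma_M^2\right)\frac{1}{|h_{U_j,M_i}|^2}$; (ii) at $B$, $$R_{U_j}\le\begin{cases}C(\gamma_{U_j,B}) & \text{if } R_M\le C\!\left(\frac{\gamma_{U_i,B}}{1+\gamma_{U_j,B}}\right),\\ C\!\left(\frac{\gamma_{U_j,B}}{1+\gamma_{U_i,B}}\right) & \text{if } R_M> C\!\left(\frac{\gamma_{U_i,B}}{1+\gamma_{U_j,B}}\right).\end{cases}$$ Define $$P^{(1)}_{U_j}=\min\left[P_U^{Max},\ \left(\frac{P_{U_i}|h_{U_i,B}|^2}{2^{R_M}-1}-\sigma_B^2\right)\frac{1}{|h_{U_j,B}|^2},\ P^\ast_{U_j}\right],\qquad P^{(2)}_{U_j}=\min\left[P_U^{Max},\ P^\ast_{U_j}\right],$$ and let $\gamma^{(m)}_{U_j,B}=P^{(m)}_{U_j}|h_{U_j,B}|^2/\sigma_B^2$. Then every rate $R_{U_j,B}$ achievable by $U_j$ under these constraints satisfies $$R_{U_j,B}\le\max\left[C\big(\gamma^{(1)}_{U_j,B}\big),\ C\!\left(\frac{\ga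mma^{(2)}_{U_j,B}}{1+\gamma_{U_i,B}}\right)\right].$$
   Context: $|h_{X,Y}|^2>0$ are instantaneous channel power gains, $\sigma_M^2$ and $\sigma_B^2$ are the noise variances at $M_i$ and $B$, $\gamma_{X,B}=P_X|h_{X,B}|^2/\sigma_B^2$, and $P_U^{Max}$ is the maximal device transmit power. $M_i$ cannot perform interference cancellation, while $B$ receives the signals of $U_i$ and $U_j$ over a Gaussian multiple access channel and may decode and cancel $U_i$'s signal before decoding $U_j$'s. *)

(* Defs.v *)
From Stdlib Require Export Reals.
Open Scope R_scope.

Definition Cap (x : R) : R := ln (1 + x) / ln 2.

(* SNR at B: gamma_{X,B} = P_X |h_{X,B}|^2 / sigma_B^2 (g = |h|^2). *)
Definition gammaB (P g sB2 : R) : R := P * g / sB2.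

Definition Pstar (RM PUi gUiMi gUjMi sM2 : R) : R :=
  (PUi * gUiMi / (Rpower 2 RM - 1) - sM2) * / gUjMi.

Definition rate_ok_B (RM PUi PUj gUiB gUjB sB2 RUj : R) : Prop :=
  let gi := gammaB PUi gUiB sB2 in
  let gj := gammaB PUj gUjB sB2 in
  (RM <= Cap (gi / (1 + gj)) -> RUj <= Cap gj) /\
  (RM > Cap (gi / (1 + gj)) -> RUj <= Cap (gj / (1 + gi))).

Definition P1 (RM PUi PMax gUiMi gUjMi gUiB gUjB sM2 sB2 : R) : R :=
  Rmin PMax (Rmin ((PUi * gUiB / (Rpower 2 RM - 1) - sB2) * / gUjB)
                  (Pstar RM PUi gUiMi gUjMi sM2)).

Definition P2 (RM PUi PMax gUiMi gUjMi sM2 : R) : R :=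
  Rmin PMax (Pstar RM PUi gUiMi gUjMi sM2).

(* Main.v *)
Require Import Defs.
From Stdlib Require Import Reals Lra.
Local Open Scope R_scope.

Lemma Cap_mono x y : 0 <= x -> x <= y -> Cap x <= Cap y.
Proof.
  intros Hx Hxy. unfold Cap. unfold Rdiv.
  apply Rmult_le_compat_r.
  - left. apply Rinv_0_lt_compat. rewrite <- ln_1. apply ln_increasing; lra.
  - destruct (Req_dec x y) as [->|E]; [lra|]. left; apply ln_increasing; lra.
Qed.

Lemma Cap_inv RM z : 0 <= z -> RM <= Cap z -> Rpower 2 RM <= 1 + z.
Proof.
  intros Hz H. unfold Cap in H.
  assert (Hl : 0 < ln 2) by (rewrite <- ln_1; apply ln_increasing; lra).
  assert (RM * ln 2 <= ln (1 + z)).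
  { apply (Rmult_le_compat_r (ln 2)) in H; [|lra].
    unfold Rdiv in H. rewrite Rmult_assoc, Rinv_l in H; lra. }
  unfold Rpower. rewrite <- (exp_ln (1+z)) by lra.
  destruct (Req_dec (RM * ln 2) (ln (1+z))) as [E|E].
  - rewrite E; lra.
  - left. apply exp_increasing. lra.
Qed.

Lemma Rpow_gt1 RM : 0 < RM -> 1 < Rpower 2 RM.
Proof.
  intros H. unfold Rpower. rewrite <- exp_0. apply exp_increasing.
  assert (0 < ln 2) by (rewrite <- ln_1; apply ln_increasing; lra).
  nra.
Qed.

Theorem theorem2
  (RM PUi PMax gUiMi gUjMi gUiB gUjB sM2 sB2 : R)
  (hRM : 0 < RM) (hPUi : 0 <= PUi) (hPMax : 0 <= PMax)
  (h1 : 0 < gUiMi) (h2 : 0 < gUjMi) (h3 : 0 < gUiB) (h4 : 0 < gUjB)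
  (hsM : 0 < sM2) (hsB : 0 < sB2)
  (PUj RUj : R)
  (hP0 : 0 <= PUj) (hPmax : PUj <= PMax)
  (hPstar : PUj <= Pstar RM PUi gUiMi gUjMi sM2)
  (hrate : rate_ok_B RM PUi PUj gUiB gUjB sB2 RUj) :
  (RUj <= Rmax
    (Cap (gammaB (P1 RM PUi PMax gUiMi gUjMi gUiB gUjB sM2 sB2) gUjB sB2))
    (Cap (Rdiv (gammaB (P2 RM PUi PMax gUiMi gUjMi sM2) gUjB sB2)
              (1 + gammaB PUi gUiB sB2))))%R.
Proof.
  destruct hrate as [Ha Hb].
  assert (Hgj : 0 <= gammaB PUj gUjB sB2).
  { unfold gammaB. apply Rmult_le_pos; [nra|left; apply Rinv_0_lt_compat; lra]. }
  assert (Hgi : 0 <= gammaB PUi gUiB sB2).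
  { unfold gammaB. apply Rmult_le_pos; [nra|left; apply Rinv_0_lt_compat; lra]. }
  assert (Hgammono : forall P P', P <= P' -> gammaB P gUjB sB2 <= gammaB P' gUjB sB2).
  { intros P P' HP. unfold gammaB, Rdiv. apply Rmult_le_compat_r.
    left; apply Rinv_0_lt_compat; lra. nra. }
  set (gi := gammaB PUi gUiB sB2) in *.
  set (gj := gammaB PUj gUjB sB2) in *.
  assert (Hz : 0 <= gi / (1 + gj)).
  { unfold Rdiv. apply Rmult_le_pos; [lra|left; apply Rinv_0_lt_compat; lra]. }
  destruct (Rle_or_lt RM (Cap (gi / (1 + gj)))) as [Hc|Hc].
  - eapply Rle_trans; [apply Ha; exact Hc|]. eapply Rle_trans; [|apply Rmax_l].
    apply Cap_mono; [exact Hgj|]. apply Hgammono.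
    unfold P1. apply Rmin_glb; [exact hPmax|]. apply Rmin_glb; [|exact hPstar].
    apply Cap_inv in Hc; [|exact Hz].
    pose proof (Rpow_gt1 RM hRM) as Hp.
    set (a := Rpower 2 RM) in *.
    assert (Hd : (a - 1) * (1 + gj) <= gi).
    { assert (a - 1 <= gi / (1 + gj)) by lra.
      apply (Rmult_le_compat_r (1+gj)) in H; [|lra].
      unfold Rdiv in H. rewrite Rmult_assoc, Rinv_l in H; lra. }
    unfold gi, gj, gammaB in Hd.
    assert (Hd2 : (a - 1) * (sB2 + PUj * gUjB) <= PUi * gUiB).
    { replace (sB2 + PUj * gUjB) with (sB2 * (1 + PUj * gUjB / sB2)) by (field; lra).
      replace (PUi * gUiB) with (sB2 * (PUi * gUiB / sB2)) by (field; lra).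
      rewrite <- Rmult_assoc, (Rmult_comm (a-1)), Rmult_assoc.
      apply Rmult_le_compat_l; lra. }
    assert (sB2 + PUj * gUjB <= PUi * gUiB / (a - 1)).
    { apply (Rmult_le_reg_l (a-1)); [lra|]. unfold Rdiv.
      replace ((a - 1) * (PUi * gUiB * / (a - 1))) with (PUi * gUiB) by (field; lra). lra. }
    replace PUj with ((PUj * gUjB) * / gUjB) by (field; lra).
    apply Rmult_le_compat_r; [left; apply Rinv_0_lt_compat; lra|lra].
  - eapply Rle_trans; [apply Hb; exact Hc|]. eapply Rle_trans; [|apply Rmax_r].
    apply Cap_mono.
    + unfold Rdiv. apply Rmult_le_pos; [lra|left; apply Rinv_0_lt_compat; lra].
    + unfold Rdiv. apply Rmult_le_compat_r; [left; apply Rinv_0_lt_compat; lra|].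
      apply Hgammono. unfold P2. apply Rmin_glb; assumption.
Qed.
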